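(* Let $G$ be a compact graph in $\mathbb{R}^d$, $C$ a finite $\epsilon$-sample of $G$, $k\ge1$, and suppose $\psi:\mathrm{DS}_k(G)\to\mathrm{DS}_k(C)$ is a bijection of multisets with $\|q-\psi(q)\|_\infty\le\epsilon$ for all $q\in\mathrm{DS}_k(G)$. If $|\mathrm{vgap}_{k,l}(G)|-|\mathrm{vgap}_{k,l+1}(G)|>4\epsilon$ for some $l\ge1$, then $\psi$ restricts to a bijection $\mathrm{VS}_{k,l}(G)\to\mathrm{VS}_{k,l}(C)$.
   Context: Offsets $X^\alpha$: union of closed radius-$\alpha$ balls centred at points of $X$. $C$ is an $\epsilon$-sample of $G$ if $C\subseteq G^\epsilon$ and $G\subseteq C^\epsilon$. $\mathrm{PD}\{X^\alpha\}$: 1-dimensional $\mathbb{Z}_2$ persistence diagram of $\{X^\alpha\}$, dots $(x,y)=$(birth, death) with multiplicity; off-diagonal part finite. Diagonal gaps: with $0<a_1<\dots<a_n$ the distinct values of $y-x$ over off-diagonal dots and $a_0=0$, gaps are $\{a_{j-1}<y-x<a_j\}$, ranked by width with lower gaps winning ties; $\mathrm{DS}_k$ is the multiset of dots above the lowest of the $k$ widest gaps. Vertical gaps of $\mathrm{DS}_k$: with $c_1<\dots<c_r$ the distinct birth coordinates of dots in $\mathrm{DS}_k$, vertical gaps are $\{c_j<x<c_{j+1}\}$ of width $c_{j+1}-c_j$ and $\{x>c_r\}$ of width $+\infty$; ranked by width with the leftmost winning ties; $\mathrm{vgap}_{k,l}$ is the $l$-th widest (width $0$ if it does not exist). $\mathrm{VS}_{k,l}$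 is the multiset of dots of $\mathrm{DS}_k$ with $x\le a$, where $\{a<x<b\}$ is the leftmost of $\mathrm{vgap}_{k,1},\dots,\mathrm{vgap}_{k,l}$. Notation with argument $X$ refers to $\mathrm{PD}\{X^\alpha\}$; $\|\cdot\|_\infty$ is the max-coordinate distance on $\mathbb{R}^2$. *)

(* Defs.v *)
From HB Require Import structures.
From mathcomp Require Import all_boot all_order all_algebra.
Set Implicit Arguments. Unset Strict Implicit. Unset Printing Implicit Defensive.
Import Order.TTheory GRing.Theory Num.Theory.
Local Open Scope ring_scope.

Section PD.
Variable R : realFieldType.

(* A dot (birth, death). A (1-dim) persistence diagram is represented by the
   finite list (with multiplicity) of its off-diagonal dots. *)
Definition dot := (R * R)%type.

Definition offdiag (D : seq dot) : bool := all (fun p : dot => p.1 < p.2) D.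

Definition dinf (p q : dot) : R := Num.max `|p.1 - q.1| `|p.2 - q.2|.

(* a_1 < ... < a_n : distinct values of y - x, stored 0-based *)
Definition avals (D : seq dot) : seq R :=
  sort <=%R (undup [seq p.2 - p.1 | p <- D]).

(* gap number j (0-based, j < n) is { lo j < y - x < hi j }, with a_0 = 0 *)
Definition dlo (D : seq dot) (j : nat) : R :=
  if j is j'.+1 then nth 0 (avals D) j' else 0.
Definition dhi (D : seq dot) (j : nat) : R := nth 0 (avals D) j.
Definition dwidth (D : seq dot) (j : nat) : R := dhi D j - dlo D j.

Definition dbeats (D : seq dot) (i j : nat) : bool :=
  (dwidth D j < dwidth D i) || ((dwidth D i == dwidth D j) && (i < j)%N).

Definition drank (D : seq dot) (j : nat) : nat :=
  count (fun i => dbeats D i j) (iota 0 (size (avals D))).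

Definition dlowest (k : nat) (D : seq dot) : nat :=
  find (fun j => (drank D j < k)%N) (iota 0 (size (avals D))).

(* DS_k : dots above the lowest of the k widest diagonal gaps *)
Definition DS (k : nat) (D : seq dot) : seq dot :=
  [seq p <- D | dlo D (dlowest k D) < p.2 - p.1].

(* extended widths: None = +infinity *)
Definition ext_gt (a b : option R) : bool :=
  match a, b with
  | None, Some _ => true
  | Some x, Some y => y < x
  | _, _ => false
  end.

(* c_1 < ... < c_r : distinct births of DS_k, stored 0-based *)
Definition cvals (k : nat) (D : seq dot) : seq R :=
  sort <=%R (undup [seq p.1 | p <- DS k D]).

(* vertical gap j (0-based, j < r) is { c_j < x < c_{j+1} } (or { x > c_r }) *)
Definition vleft (k : nat) (D : seq dot) (j : nat) : R := nth 0 (cvals k D) j.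
Definition vwidth (k : nat) (D : seq dot) (j : nat) : option R :=
  if (j.+1 < size (cvals k D))%N
  then Some (nth 0 (cvals k D) j.+1 - nth 0 (cvals k D) j) else None.

Definition vbeats (k : nat) (D : seq dot) (i j : nat) : bool :=
  ext_gt (vwidth k D i) (vwidth k D j) ||
  ((vwidth k D i == vwidth k D j) && (i < j)%N).

Definition vrank (k : nat) (D : seq dot) (j : nat) : nat :=
  count (fun i => vbeats k D i j) (iota 0 (size (cvals k D))).

(* |vgap_{k,l}| (l >= 1): width of the l-th widest vertical gap, 0 if none *)
Definition vgap_width (k l : nat) (D : seq dot) : option R :=
  if [seq j <- iota 0 (size (cvals k D)) | vrank k D j == l.-1] is j :: _
  then vwidth k D j else Some 0.

(* "|a| - |b| > t" for extended widths (+infinity minus finite = +infinity) *)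
Definition ext_sub_gt (a b : option R) (t : R) : bool :=
  match a, b with
  | None, Some _ => true
  | Some x, Some y => t < x - y
  | _, _ => false
  end.

Definition vleftmost (k l : nat) (D : seq dot) : nat :=
  find (fun j => (vrank k D j < l)%N) (iota 0 (size (cvals k D))).
Definition vthr (k l : nat) (D : seq dot) : R := vleft k D (vleftmost k l D).

Definition inVS (k l : nat) (D : seq dot) (p : dot) : bool := p.1 <= vthr k l D.
Definition VS (k l : nat) (D : seq dot) : seq dot := [seq p <- DS k D | inVS k l D p].

End PD.

(* Main.v *)
Require Import Defs.
From HB Require Import structures.
From mathcomp Require Import all_boot all_order all_algebra.
From mathcomp Require Import lra.
Import Order.TTheory GRing.Theory Num.Theory.
Local Open Scope ring_scope.

Module Helpers.
Set Implicit Arguments. Unset Strict Implicit.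

Section Aux.
Variable R : realFieldType.
Implicit Types (a b : option R).

Lemma ext_gt_irr a : ext_gt a a = false.
Proof. by case: a => [x|] //=; rewrite ltxx. Qed.

Lemma ext_gt_trans a b c : ext_gt a b -> ext_gt b c -> ext_gt a c.
Proof.
case: a => [x|]; case: b => [y|]; case: c => [z|] //=.
exact: (fun h1 h2 => lt_trans h2 h1).
Qed.

Lemma ext_gt_asym a b : ext_gt a b -> ext_gt b a = false.
Proof.
move=> h; apply/negbTE/negP => h'.
by have := ext_gt_trans h h'; rewrite ext_gt_irr.
Qed.

Lemma ext_total a b : [|| ext_gt a b, a == b | ext_gt b a].
Proof.
case: a => [x|]; case: b => [y|] //=.
by case: (ltgtP x y) => [h|h|->]; rewrite ?h ?eqxx ?orbT.
Qed.

Variables (k : nat) (D : seq (dot R)).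
Local Notation cv := (cvals k D).
Local Notation r := (size (cvals k D)).
Local Notation w := (vwidth k D).
Local Notation beats := (vbeats k D).
Local Notation rank := (vrank k D).

Lemma cv_sorted : sorted <%R cv.
Proof. by rewrite /cvals sort_lt_sorted undup_uniq. Qed.

Lemma cv_lt i j : (i < r)%N -> (j < r)%N -> (i < j)%N -> nth 0 cv i < nth 0 cv j.
Proof. by move=> hi hj hij; rewrite (lt_sorted_ltn_nth 0 cv_sorted). Qed.

Lemma cv_le i j : (i < r)%N -> (j < r)%N -> (i <= j)%N -> nth 0 cv i <= nth 0 cv j.
Proof. by move=> hi hj hij; rewrite (lt_sorted_leq_nth 0 cv_sorted). Qed.

Lemma w_pos j x : w j = Some x -> 0 < x.
Proof.
rewrite /vwidth; case: ifP => // h [<-].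
by rewrite subr_gt0 cv_lt // ltnW.
Qed.

Lemma beats_irr i : beats i i = false.
Proof. by rewrite /vbeats ext_gt_irr ltnn andbF. Qed.

Lemma beats_trans i j m : beats i j -> beats j m -> beats i m.
Proof.
rewrite /vbeats => /orP[h1|/andP[/eqP e1 l1]] /orP[h2|/andP[/eqP e2 l2]].
- by rewrite (ext_gt_trans h1 h2).
- by rewrite -e2 h1.
- by rewrite e1 h2.
- by rewrite e1 e2 eqxx (ltn_trans l1 l2) orbT.
Qed.

Lemma beats_asym i j : beats i j -> beats j i = false.
Proof.
move=> h; apply/negbTE/negP => h'.
by have := beats_trans h h'; rewrite beats_irr.
Qed.

Lemma beats_total i j : i != j -> beats i j || beats j i.
Proof.
move=> nij; rewrite /vbeats.
case/or3P: (ext_total (w i) (w j)) => [->|/eqP e|->]; rewrite ?orbT //.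
rewrite e eqxx /= ext_gt_irr /=; move: nij; case: (ltngtP i j) => // ->; rewrite eqxx.
Qed.

Lemma count_le_in (T : eqType) (P Q : pred T) (s : seq T) :
  {in s, forall x, P x -> Q x} -> (count P s <= count Q s)%N.
Proof.
elim: s => [|y s IH] sub //=.
have IH' := IH (fun z zs => sub z ltac:(by rewrite inE zs orbT)).
case Py: (P y); first by rewrite (sub y (mem_head _ _) Py) !add1n ltnS.
by rewrite add0n (leq_trans IH') // leq_addl.
Qed.

Lemma count_lt_sub (T : eqType) (P Q : pred T) (s : seq T) :
  {in s, forall x, P x -> Q x} -> (exists2 x, x \in s & Q x && ~~ P x) ->
  (count P s < count Q s)%N.
Proof.
elim: s => [|y s IH] sub [x]; first by [].
rewrite inE => /orP[/eqP ->|xs] hx /=.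
- case/andP: hx => -> /negbTE ->; rewrite add0n add1n ltnS.
  apply: count_le_in => z zs; apply: sub; by rewrite inE zs orbT.
- have IH' := IH (fun z zs => sub z ltac:(by rewrite inE zs orbT)) (ex_intro2 _ _ x xs hx).
  case Py: (P y); first by rewrite (sub y (mem_head _ _) Py) !add1n ltnS.
  by rewrite add0n; apply: (leq_trans IH'); apply: leq_addl.
Qed.

Lemma rank_lt i j : (i < r)%N -> beats i j -> (rank i < rank j)%N.
Proof.
move=> ir bij; rewrite /vrank; apply: count_lt_sub.
  by move=> x _ h; apply: beats_trans h bij.
by exists i; rewrite ?mem_iota ?add0n ?ir ?bij ?beats_irr.
Qed.

Lemma rank_bound j : (j < r)%N -> (rank j < r)%N.
Proof.
move=> jr; rewrite /vrank -{2}(size_iota 0 r) -count_predT.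
apply: (@count_lt_sub nat (fun x => beats x j) predT) => //.
by exists j; rewrite ?mem_iota ?add0n ?jr ?beats_irr.
Qed.

Lemma rank_inj i j : (i < r)%N -> (j < r)%N -> rank i = rank j -> i = j.
Proof.
move=> ir jr e; apply/eqP; apply/negP => /negP nij.
case/orP: (beats_total nij) => h.
- by have := rank_lt ir h; rewrite e ltnn.
- by have := rank_lt jr h; rewrite e ltnn.
Qed.

Definition ext_ge a b := ext_gt a b || (a == b).

Lemma rank_mono i j : (i < r)%N -> (j < r)%N -> (rank i <= rank j)%N ->
  ext_ge (w i) (w j).
Proof.
move=> ir jr le; have [->|nij] := eqVneq i j; first by rewrite /ext_ge eqxx orbT.
case/orP: (beats_total nij) => h.
- by move: h; rewrite /vbeats /ext_ge => /orP[->//|/andP[->]]; rewrite orbT.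
- by have := rank_lt jr h; rewrite ltnNge le.
Qed.

Lemma rank_surj m : (m < r)%N -> exists2 j, (j < r)%N & rank j = m.
Proof.
move=> mr.
pose F (j : 'I_r) : 'I_r := Ordinal (rank_bound (ltn_ord j)).
have Finj : injective F.
  move=> a b /(congr1 val) /= e; apply: val_inj.
  exact: rank_inj (ltn_ord a) (ltn_ord b) e.
have [G FG GF] := injF_bij Finj.
exists (G (Ordinal mr)) => //.
by have := congr1 val (GF (Ordinal mr)).
Qed.

Lemma L1 (S : pred nat) :
  (forall i j, (i < r)%N -> (j < r)%N -> S i -> ~~ S j -> beats i j) ->
  forall j, (j < r)%N -> (rank j < count S (iota 0 r))%N = S j.
Proof.
move=> hS j jr; case Sj: (S j).
- rewrite /vrank; apply: count_lt_sub.
    move=> x; rewrite mem_iota add0n /= => xr bxj.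
    apply/negPn/negP => nSx.
    by have := hS _ _ jr xr Sj nSx; rewrite beats_asym.
  by exists j; rewrite ?mem_iota ?add0n ?jr ?beats_irr ?Sj.
- apply/negbTE; rewrite -leqNgt /vrank; apply: count_le_in.
  move=> x; rewrite mem_iota add0n /= => xr Sx.
  by apply: hS => //; rewrite Sj.
Qed.

End Aux.

Section Aux2.
Variable R : realFieldType.

Definition iso (th : R) (s : seq R) (c : R) : bool :=
  all (fun b => (b <= c) || (c + th < b)) s.

Lemma iso_mono th1 th2 s c : th2 <= th1 -> iso th1 s c -> iso th2 s c.
Proof.
move=> le /allP h; apply/allP => b /h /orP[->//|lt].
by apply/orP; right; lra.
Qed.

Section W.
Variables (k : nat) (D : seq (dot R)).
Local Notation cv := (cvals k D).
Local Notation r := (size (cvals k D)).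
Local Notation w := (vwidth k D).

Lemma IDX th j : (j < r)%N -> iso th cv (nth 0 cv j) = ext_gt (w j) (Some th).
Proof.
move=> jr; rewrite /vwidth; case: ifP => h /=.
- apply/allP/idP.
  + move=> /(_ (nth 0 cv j.+1) (mem_nth _ h)).
    rewrite leNgt (cv_lt jr h (ltnSn j)) /= => lt; lra.
  + move=> lt b /(nthP 0) [m mr <-].
    case: (leqP m j) => mj; first by rewrite cv_le.
    have := cv_le h mr mj => le; apply/orP; right; lra.
- apply/allP => b /(nthP 0) [m mr <-].
  rewrite cv_le //; rewrite -ltnS; apply: (leq_trans mr); rewrite leqNgt h.
  done.
Qed.

Lemma count_IDX th :
  count (fun j => ext_gt (w j) (Some th)) (iota 0 r) = count (iso th cv) cv.
Proof.
have -> : count (iso th cv) cv = count (iso th cv) (mkseq (nth 0 cv) r) by rewrite mkseq_nth.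
rewrite /mkseq count_map; apply: eq_in_count => j.
by rewrite mem_iota add0n => /andP[_ jr] /=; rewrite IDX.
Qed.
End W.

Definition mxd (d : R) (s : seq R) : R := foldr Num.max d s.

Lemma mxd_ge d s x : x \in s -> x <= mxd d s.
Proof.
elim: s => [|y s IH] //=; rewrite inE => /orP[/eqP->|xs].
  by rewrite le_max lexx.
by rewrite le_max IH ?orbT.
Qed.

Lemma mxd_mem d s : mxd d s \in d :: s.
Proof.
elim: s => [|y s IH] /=; first by rewrite inE eqxx.
rewrite /Num.max; case: ifP => _; last by rewrite !inE eqxx orbT.
move: IH; rewrite !inE => /orP[->//|->]; by rewrite !orbT.
Qed.

Definition mx (s : seq R) : R := mxd (head 0 s) s.

Lemma mx_mem s : s != [::] -> mx s \in s.
Proof.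
case: s => [//|y s] _; have := mxd_mem y (y :: s); rewrite /mx /= inE.
by case/orP => [/eqP ->|]; rewrite ?mem_head.
Qed.

Lemma mx_ge s x : x \in s -> x <= mx s.
Proof. exact: mxd_ge. Qed.

Lemma lin1 (eps th1 th2 y c d b : R) : th2 + 2 * eps <= th1 -> y <= c + eps ->
  b <= d + eps -> c + th1 < b -> y + th2 < d.
Proof. move=> *; lra. Qed.

Lemma lin2 (eps th1 th2 y z c1 c2 : R) : th2 + 2 * eps <= th1 -> 0 <= th2 ->
  y <= c1 + eps -> c2 - eps <= z -> c1 + th1 < c2 -> y < z.
Proof. move=> *; lra. Qed.

Section Transfer.
Variables (eps : R) (s t : seq R).
Hypothesis M : forall b, b \in s -> exists2 c, c \in t & `|b - c| <= eps.
Hypothesis M' : forall c, c \in t -> exists2 b, b \in s & `|b - c| <= eps.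

Definition hh (c : R) : R := mx [seq c' <- t | c' <= c + eps].

Lemma hh_props c : c \in s ->
  [/\ hh c \in t, c - eps <= hh c, hh c <= c + eps &
      forall c'', c'' \in t -> c'' <= c + eps -> c'' <= hh c].
Proof.
move=> cs; have [c0 c0t] := M cs; rewrite ler_distl => /andP[h1 h2].
have c0f : c0 \in [seq c' <- t | c' <= c + eps] by rewrite mem_filter c0t; lra.
have ne : [seq c' <- t | c' <= c + eps] != [::] by apply/eqP => e; rewrite e in c0f.
have := mx_mem ne; rewrite mem_filter -/(hh c) => /andP[hl ht].
have ge := mx_ge c0f; rewrite -/(hh c) in ge.
split => //; first by lra.
by move=> c'' c''t le; apply: mx_ge; rewrite mem_filter le c''t.
Qed.

Variables th1 th2 : R.
Hypothesis hth : th2 + 2 * eps <= th1.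
Hypothesis hth2 : 0 <= th2.

Lemma hh_iso c : c \in s -> iso th1 s c -> iso th2 t (hh c).
Proof.
move=> cs /allP isoc; have [ht hl hu hmax] := hh_props cs.
apply/allP => c'' c''t; case: (lerP c'' (c + eps)) => le.
  by rewrite hmax.
have [b bs] := M' c''t; rewrite ler_distl => /andP[h1 h2].
have := isoc b bs; case/orP => hb; first lra.
apply/orP; right; exact: (lin1 hth hu h2 hb).
Qed.

Lemma hh_inj : {in [seq c <- s | iso th1 s c] &, injective hh}.
Proof.
have key : forall c1 c2, c1 \in [seq c <- s | iso th1 s c] ->
    c2 \in [seq c <- s | iso th1 s c] -> c1 < c2 -> hh c1 < hh c2.
  move=> c1 c2; rewrite !mem_filter => /andP[/allP i1 s1] /andP[_ s2] lt.
  have [_ _ u1 _] := hh_props s1; have [_ l2 _ _] := hh_props s2.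
  have := i1 c2 s2; rewrite leNgt lt /= => lt2; exact: (lin2 hth hth2 u1 l2 lt2).
move=> c1 c2 h1 h2 e; case: (ltgtP c1 c2) => // lt.
  by have := key _ _ h1 h2 lt; rewrite e ltxx.
by have := key _ _ h2 h1 lt; rewrite e ltxx.
Qed.

Lemma count_transfer : uniq s -> (count (iso th1 s) s <= count (iso th2 t) t)%N.
Proof.
move=> us; rewrite -!size_filter -(size_map hh).
apply: uniq_leq_size.
  by rewrite (map_inj_in_uniq hh_inj) filter_uniq.
move=> x /mapP [c]; rewrite mem_filter => /andP[ic cs] ->.
by have [ht _ _ _] := hh_props cs; rewrite mem_filter hh_iso.
Qed.
End Transfer.
End Aux2.

Section Aux3.
Variable R : realFieldType.

Lemma ext_gt_mono (a : option R) x y : y <= x -> ext_gt a (Some x) -> ext_gt a (Some y).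
Proof. case: a => [z|] //= le lt; exact: le_lt_trans le lt. Qed.

Lemma ext_sep (a b : option R) th :
  ext_gt a (Some th) -> ~~ ext_gt b (Some th) -> ext_gt a b.
Proof.
case: a => [x|]; case: b => [y|] //= h1; rewrite -leNgt => h2.
exact: le_lt_trans h2 h1.
Qed.

Lemma ext_ge_gap (a b : option R) T e :
  ext_ge a b -> ext_sub_gt b (Some T) e -> ext_gt a (Some (T + e)).
Proof.
rewrite /ext_ge => /orP[h|/eqP->].
- case: a b h => [x|] [y|] //= h1 h2; rewrite -ltrBrDl.
  exact: (lt_trans h2 (ltrB2r T h1)) || (by apply: (lt_trans h2); rewrite ltrD2r).
- by case: b => [y|] //= h; rewrite -ltrBrDl.
Qed.

Lemma ext_ge_not (a : option R) T : ext_ge (Some T) a -> ~~ ext_gt a (Some T).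
Proof.
rewrite /ext_ge => /orP[h|/eqP<-]; last by rewrite ext_gt_irr.
by rewrite ext_gt_asym.
Qed.

Lemma mem_cv k (D : seq (dot R)) b : (b \in cvals k D) = (b \in [seq p.1 | p <- DS k D]).
Proof. by rewrite /cvals mem_sort mem_undup. Qed.

Lemma THR k l (D : seq (dot R)) th :
  (forall j, (j < size (cvals k D))%N -> (vrank k D j < l)%N = ext_gt (vwidth k D j) (Some th)) ->
  (0 < size (cvals k D))%N ->
  [/\ vthr k l D \in cvals k D, iso th (cvals k D) (vthr k l D) &
      forall y, y \in cvals k D -> iso th (cvals k D) y -> vthr k l D <= y].
Proof.
set r := size (cvals k D) => hr r0.
have hasP : has (fun j => (vrank k D j < l)%N) (iota 0 r).
  apply/hasP; exists r.-1; first by rewrite mem_iota add0n prednK // leqnn.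
  rewrite hr ?prednK //; by rewrite /vwidth prednK // ltnn.
have := hasP; rewrite has_find size_iota => jmr.
have := nth_find 0 hasP; rewrite /vthr /vleftmost -/r.
set jm := find _ _ in jmr *; rewrite nth_iota // add0n => rk.
split.
- by rewrite /vleft mem_nth.
- by rewrite /vleft IDX // -(hr _ jmr).
- move=> y /(nthP 0) [m mr <-]; rewrite (IDX _ mr) -(hr _ mr) => rkm.
  rewrite /vleft cv_le //; rewrite leqNgt; apply/negP => mj.
  by have := before_find 0 mj; rewrite nth_iota // add0n rkm.
Qed.

Lemma fin1 (x x' a a' eps T : R) : 0 <= T -> `|x - x'| <= eps -> x <= a -> a <= a' + eps ->
  ((x' <= a') || (a' + (T + 2 * eps) < x')) -> x' <= a'.
Proof. rewrite ler_distl => hT /andP[h1 h2] h3 h4 /orP[//|h]; exfalso; lra. Qed.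

Lemma fin2 (x x' a a' eps T : R) : 0 <= T -> `|x - x'| <= eps -> a < x -> a' <= a + eps ->
  ((x <= a) || (a + (T + 4 * eps) < x)) -> a' < x'.
Proof. rewrite ler_distl => hT /andP[h1 h2] h3 h4 /orP[h|h]; lra. Qed.

End Aux3.

End Helpers.
Import Helpers.
Unset Implicit Arguments. Set Strict Implicit.

Theorem mainTheorem13 (R : realFieldType) (DG DC : seq (dot R)) (eps : R)
    (k l : nat)
    (hG : offdiag DG) (hC : offdiag DC) (hk : (0 < k)%N)
    (psi : 'I_(size (DS k DG)) -> 'I_(size (DS k DC)))
    (hpsi : bijective psi)
    (hclose : forall i : 'I_(size (DS k DG)),
        dinf (nth (0, 0) (DS k DG) i) (nth (0, 0) (DS k DC) (psi i)) <= eps)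
    (hl : (0 < l)%N)
    (hgap : ext_sub_gt (vgap_width k l DG) (vgap_width k l.+1 DG) (4 * eps)) :
  forall i : 'I_(size (DS k DG)),
    inVS k l DG (nth (0, 0) (DS k DG) i) = inVS k l DC (nth (0, 0) (DS k DC) (psi i)).
Proof.
move=> i0.
set P := DS k DG; set Q := DS k DC.
set sG := cvals k DG; set sC := cvals k DC.
have close1 : forall i : 'I_(size P), `|(nth (0, 0) P i).1 - (nth (0, 0) Q (psi i)).1| <= eps.
  by move=> i; apply: le_trans (hclose i); rewrite /dinf le_max lexx.
have eps0 : 0 <= eps by apply: le_trans (close1 i0).
have [phi psiK phiK] := hpsi.
have M : forall b, b \in sG -> exists2 c, c \in sC & `|b - c| <= eps.
  move=> b; rewrite mem_cv => /mapP [p /(nthP (0,0)) [m mP <-] ->].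
  exists (nth (0,0) Q (psi (Ordinal mP))).1; last exact: (close1 (Ordinal mP)).
  by rewrite mem_cv; apply: map_f; apply: mem_nth.
have M' : forall c, c \in sC -> exists2 b, b \in sG & `|b - c| <= eps.
  move=> c; rewrite mem_cv => /mapP [p /(nthP (0,0)) [m mQ <-] ->].
  exists (nth (0,0) P (phi (Ordinal mQ))).1; last first.
    by have := close1 (phi (Ordinal mQ)); rewrite phiK.
  by rewrite mem_cv; apply: map_f; apply: mem_nth.
have M2 : forall c, c \in sC -> exists2 b, b \in sG & `|c - b| <= eps.
  by move=> c /M' [b bs h]; exists b; rewrite // distrC.
have M2' : forall b, b \in sG -> exists2 c, c \in sC & `|c - b| <= eps.
  by move=> b /M [c cs h]; exists c; rewrite // distrC.
set rG := size sG; set rC := size sC.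
have E1 : vgap_width k l.+1 DG =
    if [seq j <- iota 0 rG | vrank k DG j == l] is j :: _ then vwidth k DG j else Some 0 by [].
have E0 : vgap_width k l DG =
    if [seq j <- iota 0 rG | vrank k DG j == l.-1] is j :: _ then vwidth k DG j else Some 0 by [].
have [T [eT T0 F2]] : exists T, [/\ vgap_width k l.+1 DG = Some T, 0 <= T &
    forall j, (j < rG)%N -> (l <= vrank k DG j)%N -> ~~ ext_gt (vwidth k DG j) (Some T)].
  move: E1; case E: [seq j <- iota 0 rG | vrank k DG j == l] => [|j1 s1] E1.
  - exists 0; split => // j jr lr.
    have [j' j'r rj'] := rank_surj (leq_ltn_trans lr (rank_bound jr)).
    have : j' \in [seq j <- iota 0 rG | vrank k DG j == l].
      by rewrite mem_filter rj' eqxx mem_iota add0n j'r.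
    by rewrite E.
  - have : j1 \in [seq j <- iota 0 rG | vrank k DG j == l] by rewrite E mem_head.
    rewrite mem_filter mem_iota add0n => /andP[/eqP rj1 j1r].
    case ew: (vwidth k DG j1) E1 => [T|] E1; last first.
      by move: hgap; rewrite E1; case: (vgap_width k l DG).
    exists T; split => //; first exact: ltW (w_pos ew).
    move=> j jr lr; apply: ext_ge_not; rewrite -ew.
    by apply: rank_mono => //; rewrite rj1.
have [F1 lrG] : (forall j, (j < rG)%N -> (vrank k DG j < l)%N ->
    ext_gt (vwidth k DG j) (Some (T + 4 * eps))) /\ (l <= rG)%N.
  move: E0 hgap; rewrite eT.
  case E: [seq j <- iota 0 rG | vrank k DG j == l.-1] => [|j0 s0] E0 hgap.
  - by move: hgap; rewrite E0 /= => h; exfalso; lra.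
  - have : j0 \in [seq j <- iota 0 rG | vrank k DG j == l.-1] by rewrite E mem_head.
    rewrite mem_filter mem_iota add0n => /andP[/eqP rj0 j0r].
    split; last by have := rank_bound j0r; rewrite rj0 prednK.
    move=> j jr rl; apply: (@ext_ge_gap _ _ (vwidth k DG j0)); last by rewrite -E0.
    by apply: rank_mono => //; rewrite rj0 -ltnS prednK.
have dich : forall th, T <= th -> th <= T + 4 * eps -> forall j, (j < rG)%N ->
    ext_gt (vwidth k DG j) (Some th) = (vrank k DG j < l)%N.
  move=> th h1 h2 j jr; case: ltnP => rl.
    exact: ext_gt_mono h2 (F1 j jr rl).
  apply/negbTE/negP => h; have := F2 j jr rl; rewrite (ext_gt_mono h1 h) //.
have cntG : forall th, T <= th -> th <= T + 4 * eps ->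
    count (iso th sG) sG = l.
  move=> th h1 h2; rewrite -count_IDX.
  have e2 : 0 <= 2 * eps by lra.
  have sep : forall i j, (i < rG)%N -> (j < rG)%N ->
      ext_gt (vwidth k DG i) (Some (T + 2 * eps)) ->
      ~~ ext_gt (vwidth k DG j) (Some (T + 2 * eps)) -> vbeats k DG i j.
    by move=> i j _ _ hi hj; rewrite /vbeats (ext_sep hi hj).
  have hL := L1 sep.
  have d2 : forall j, (j < rG)%N ->
      ext_gt (vwidth k DG j) (Some (T + 2 * eps)) = (vrank k DG j < l)%N.
    by move=> j jr; apply: dich => //; lra.
  have -> : count (fun j => ext_gt (vwidth k DG j) (Some th)) (iota 0 rG) =
      count (fun j => ext_gt (vwidth k DG j) (Some (T + 2 * eps))) (iota 0 rG).
    apply: eq_in_count => j; rewrite mem_iota add0n => /andP[_ jr].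
    by rewrite dich // d2.
  set cS := count _ _ in hL *.
  have cSr : (cS <= rG)%N by rewrite /cS; apply: leq_trans (count_size _ _) _; rewrite size_iota.
  case: (ltngtP cS l) => // h.
  - have [j jr rj] := rank_surj (leq_trans h lrG).
    by have := hL j jr; rewrite rj ltnn d2 // rj h.
  - have [j jr rj] := rank_surj (leq_trans h cSr).
    by have := hL j jr; rewrite rj h d2 // rj ltnn.
have uG : uniq sG by rewrite /sG /cvals sort_uniq undup_uniq.
have uC : uniq sC by rewrite /sC /cvals sort_uniq undup_uniq.
have e2 : 0 <= 2 * eps by lra.
have cC : count (iso (T + 2 * eps) sC) sC = l.
  apply/eqP; rewrite eqn_leq; apply/andP; split.
    rewrite -(cntG T) ?lexx //; last by lra.
    apply: (count_transfer M2 M2') => //; lra.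
  rewrite -{1}(cntG (T + 4 * eps)) ?lexx //; last by lra.
  apply: (count_transfer M M') => //; lra.
have rankC : forall j, (j < rC)%N ->
    (vrank k DC j < l)%N = ext_gt (vwidth k DC j) (Some (T + 2 * eps)).
  move=> j jr; rewrite -cC -count_IDX; apply: L1 => // i j' _ _ hi hj.
  by rewrite /vbeats (ext_sep hi hj).
set x := (nth (0, 0) P i0).1; set x' := (nth (0, 0) Q (psi i0)).1.
have xG : x \in sG by rewrite mem_cv; apply: map_f; apply: mem_nth.
have xC : x' \in sC by rewrite mem_cv; apply: map_f; apply: mem_nth.
have rG0 : (0 < rG)%N by rewrite lt0n size_eq0; apply/eqP => e; rewrite e in xG.
have rC0 : (0 < rC)%N by rewrite lt0n size_eq0; apply/eqP => e; rewrite e in xC.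
have [aG isoa mina] := THR (l := l) (th := T)
  (fun j jr => esym (dich T (lexx T) ltac:(lra) j jr)) rG0.
have [aC isoa' mina'] := THR (l := l) rankC rC0.
set a := vthr k l DG in aG isoa mina *.
set a' := vthr k l DC in aC isoa' mina' *.
have isoeq : forall y, y \in sG -> iso T sG y = iso (T + 4 * eps) sG y.
  move=> y /(nthP 0) [m mr <-]; rewrite !IDX // !dich //; lra.
have [fa_in _ fa_le _] := hh_props M aG.
have fa_iso : iso (T + 2 * eps) sC (hh eps sC a).
  apply: (hh_iso M M' (th1 := T + 4 * eps)) => //; first lra.
  by rewrite -isoeq.
have a'le : a' <= a + eps by apply: le_trans (mina' _ fa_in fa_iso) fa_le.
have [ga_in _ ga_le _] := hh_props M2 aC.
have ga_iso : iso T sG (hh eps sG a').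
  apply: (hh_iso M2 M2' (th1 := T + 2 * eps)) => //; lra.
have ale : a <= a' + eps by apply: le_trans (mina _ ga_in ga_iso) ga_le.
have cl := close1 i0; rewrite -/x -/x' in cl.
rewrite /inVS -/x -/x' -/a -/a'.
case: (lerP x a) => hx.
- apply/esym; apply: (fin1 T0 cl hx ale).
  by move/allP: isoa' => /(_ x' xC).
- apply/esym/negbTE; rewrite -ltNge.
  apply: (fin2 T0 cl hx a'le).
  by move: isoa; rewrite isoeq // => /allP /(_ x xG).
Qed.
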